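(* Let $\mathcal{G}=(G,o,R_1,\ldots,R_n)$ be a functional Menger system of rank $n$ and let $H$ be a nonempty subset of $G$. Then $H$ is a stabilizer of $\mathcal{G}$ if and only if $H$ is a quasi-stable, $l$-unitary normal $v$-complex and there exists a subset $U\subseteq G$ with $H\subseteq U$ such that $R_iU\subseteq H$ and $R_i(G\setminus U)\subseteq G\setminus U$ for every $i\in\{1,\ldots,n\}$, and such that for all $x,y\in G$, all $t\in T_n(G)$, all $i\in\{1,\ldots,n\}$, all $u\in G$ and all $\bar w=(w_1,\ldots,w_n)\in G^n$: (1) if $x\in H$, $y\in H$ and $t(x)\in U$, then $t(y)\in U$; (2) if $x=y[R_1x\ldots R_nx]\in U$ and $u[\bar w\,|_i y]\in H$, then $u[\bar w\,|_i x]\in H$; (3) if $x=y[R_1x\ldots R_nx]\in U$ and $u[\bar w\,|_i y]\in U$, then $u[\bar w\,|_i x]\in U$; where in (2) and (3) the prefix $u[\bar w\,|_i\ ]$ is also allowed to be empty, i.e. (2) and (3) are also required with $u[\bar w\,|_i y]$ replaced by $y$ and $u[\bar w\,|_i x]$ replaced by $x$.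
   Context: A functional Menger system of rank $n$ is a nonempty set $G$ with an $(n+1)$-ary operation $o\colon(x_0,x_1,\ldots,x_n)\mapsto x_0[x_1\ldots x_n]$ and unary operations $R_1,\ldots,R_n$ satisfying, for all $i,k\in\{1,\ldots,n\}$ and all elements: (A1) $x[y_1\ldots y_n][z_1\ldots z_n]=x[y_1[z_1\ldots z_n]\ldots y_n[z_1\ldots z_n]]$; (A2) $x[R_1x\ldots R_nx]=x$; (A3) $x[\bar u\,|_iz][R_1y\ldots R_ny]=x[\bar u\,|_iz[R_1y\ldots R_ny]]$; (A4) $R_ix[R_1y\ldots R_ny]=(R_ix)[R_1y\ldots R_ny]$; (A5) $x[R_1y\ldots R_ny][R_1z\ldots R_nz]=x[R_1z\ldots R_nz][R_1y\ldots R_ny]$; (A6) $R_ix[y_1\ldots y_n]=R_i(R_kx)[y_1\ldots y_n]$; (A7) $(R_ix)[y_1\ldots y_n]=y_i[R_1(x[y_1\ldots y_n])\ldots R_n(x[y_1\ldots y_n])]$. Here $x[\bar u\,|_iz]$ denotes $x[u_1\ldots u_{i-1}\,z\,u_{i+1}\ldots u_n]$ for $\bar u=(u_1,\ldots,u_n)$, and $R_ix[\ldots]$ means $R_i(x[\ldots])$. For a set $A$, $\mathcal F(A^n,A)$ is the set of partial maps $A^n\to A$. For $f,g_1,\ldots,g_n\in\mathcal F(A^n,A)$, the Menger composition $f[g_1\ldots g_n]$ is the partial function $\bar a\mapsto f(g_1(\bar a),\ldots,g_n(\bar a))$ (defined exactly when the right side is defined), and $\mathcal R_if$ is the partial function with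 domain equal to the domain of $f$ given by $(a_1,\ldots,a_n)\mapsto a_i$. A representation of $\mathcal G$ by $n$-place functions on a set $A$ is a map $P\colon G\to\mathcal F(A^n,A)$ with $P(x[y_1\ldots y_n])=P(x)[P(y_1)\ldots P(y_n)]$ and $P(R_ix)=\mathcal R_iP(x)$ for all $x,y_j$ and $i$. A nonempty subset $H\subseteq G$ is a stabilizer of $\mathcal G$ if there exist a representation $P$ of $\mathcal G$ by $n$-place functions on some set $A$ and a point $a\in A$ such that $H=\{g\in G : P(g)(a,\ldots,a)=a\}$. $T_n(G)$ is the smallest set of maps $G\to G$ (written $x\mapsto t(x)$) containing the identity map $x\mapsto x$ and such that whenever $t\in T_n(G)$, then also $x\mapsto a[\bar b\,|_it(x)]$ and $x\mapsto R_it(x)$ belong to $T_n(G)$ for all $a\in G$, $\bar b\in G^n$, $i\in\{1,\ldots,n\}$. A nonempty $H\subseteq G$ is: quasi-stable if $x\in H$ implies $x[x\ldots x]\in H$; $l$-unitary if $x[y\ldots y]\in H$ and $y\in H$ imply $x\in H$; a normal $v$-complex if for all $x,y\in G$ and $t\in T_n(G)$, $x,y\in H$ and $t(x)\in H$ imply $t(y)\in H$. *)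

(* Defs.v *)
From mathcomp Require Import all_boot.
Set Implicit Arguments. Unset Strict Implicit. Unset Printing Implicit Defensive.

Section Menger.
Variables (G : Type) (n : nat).
Variable o : G -> {ffun 'I_n -> G} -> G.      (* x[y_1 ... y_n] *)
Variable R : 'I_n -> G -> G.

(* \bar u |_i z : replace the i-th entry of u by z *)
Definition subst_at (u : {ffun 'I_n -> G}) (i : 'I_n) (z : G) : {ffun 'I_n -> G} :=
  [ffun j => if j == i then z else u j].

Definition Rtuple (y : G) : {ffun 'I_n -> G} := [ffun j => R j y].

Definition functional_menger : Prop :=
  (forall x (y z : {ffun 'I_n -> G}),
      o (o x y) z = o x [ffun j => o (y j) z]) /\
  (forall x, o x (Rtuple x) = x) /\
  (forall x u i z y,
      o (o x (subst_at u i z)) (Rtuple y) = o x (subst_at u i (o z (Rtuple y)))) /\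
  (forall i x y, R i (o x (Rtuple y)) = o (R i x) (Rtuple y)) /\
  (forall x y z,
      o (o x (Rtuple y)) (Rtuple z) = o (o x (Rtuple z)) (Rtuple y)) /\
  (forall i k x (y : {ffun 'I_n -> G}), R i (o x y) = R i (o (R k x) y)) /\
  (forall i x (y : {ffun 'I_n -> G}), o (R i x) y = o (y i) (Rtuple (o x y))).

Inductive Tn : (G -> G) -> Prop :=
  | Tn_id : Tn (fun x => x)
  | Tn_sub : forall t a (b : {ffun 'I_n -> G}) i,
      Tn t -> Tn (fun x => o a (subst_at b i (t x)))
  | Tn_R : forall t i, Tn t -> Tn (fun x => R i (t x)).

Definition quasi_stable (H : G -> Prop) : Prop :=
  forall x, H x -> H (o x [ffun => x]).

Definition l_unitary (H : G -> Prop) : Prop :=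
  forall x y, H (o x [ffun => y]) -> H y -> H x.

Definition normal_v_complex (H : G -> Prop) : Prop :=
  forall x y t, Tn t -> H x -> H y -> H (t x) -> H (t y).

End Menger.

Definition pfun (n : nat) (A : Type) := {ffun 'I_n -> A} -> option A.

Definition is_mcomp (n : nat) (A : Type) (f : pfun n A) (g : 'I_n -> pfun n A)
  (h : pfun n A) : Prop :=
  forall (a : {ffun 'I_n -> A}) (b : A),
    h a = Some b <->
    exists c : {ffun 'I_n -> A}, (forall j, g j a = Some (c j)) /\ f c = Some b.

Definition pR (n : nat) (A : Type) (i : 'I_n) (f : pfun n A) : pfun n A :=
  fun a => if f a is Some _ then Some (a i) else None.

Definition representation (G : Type) (n : nat) (o : G -> {ffun 'I_n -> G} -> G)
  (R : 'I_n -> G -> G) (A : Type) (P : G -> pfun n A) : Prop :=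
  (forall x (y : {ffun 'I_n -> G}), is_mcomp (P x) (fun j => P (y j)) (P (o x y))) /\
  (forall i x, P (R i x) = pR i (P x)).

Definition stabilizer (G : Type) (n : nat) (o : G -> {ffun 'I_n -> G} -> G)
  (R : 'I_n -> G -> G) (H : G -> Prop) : Prop :=
  (exists x, H x) /\
  exists (A : Type) (P : G -> pfun n A) (a : A),
    representation o R P /\
    forall g, H g <-> P g [ffun => a] = Some a.

(* Main.v *)
Require Import Defs.
From mathcomp Require Import all_boot.
From Stdlib Require Import Setoid ClassicalEpsilon PropExtensionality FunctionalExtensionality Classical.
Set Implicit Arguments. Unset Strict Implicit. Unset Printing Implicit Defensive.

Lemma opt_ext (T : Type) (o1 o2 : option T) :
  (forall b, o1 = Some b <-> o2 = Some b) -> o1 = o2.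
Proof.
case: o1 => [b1|]; case: o2 => [b2|] // E.
- by have /E := erefl (Some b1).
- by have /E := erefl (Some b1).
- by have /E := erefl (Some b2).
Qed.

Lemma forward (G : Type) (n : nat) (o : G -> {ffun 'I_n -> G} -> G)
  (R : 'I_n -> G -> G) (H : G -> Prop) :
  stabilizer o R H ->
   (quasi_stable o H /\ l_unitary o H /\ normal_v_complex o R H /\
    exists U : G -> Prop,
      (forall x, H x -> U x) /\
      (forall i x, U x -> H (R i x)) /\
      (forall i x, ~ U x -> ~ U (R i x)) /\
      (forall x y t, Tn o R t -> H x -> H y -> U (t x) -> U (t y)) /\
      (forall x y i u (w : {ffun 'I_n -> G}),
         x = o y (Rtuple R x) -> U x ->
         H (o u (subst_at w i y)) -> H (o u (subst_at w i x))) /\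
      (forall x y, x = o y (Rtuple R x) -> U x -> H y -> H x) /\
      (forall x y i u (w : {ffun 'I_n -> G}),
         x = o y (Rtuple R x) -> U x ->
         U (o u (subst_at w i y)) -> U (o u (subst_at w i x))) /\
      (forall x y, x = o y (Rtuple R x) -> U x -> U y -> U x)).
Proof.
move=> [_ [A [P [a [[Pc PR] HP]]]]].
set abar : {ffun 'I_n -> A} := [ffun => a].
have cong : forall f (ys zs : {ffun 'I_n -> G}),
    (forall j, P (ys j) abar = P (zs j) abar) -> P (o f ys) abar = P (o f zs) abar.
  move=> f ys zs E; apply: opt_ext => b.
  rewrite (Pc f ys abar b) (Pc f zs abar b).
  by split=> -[c [Hc Hf]]; exists c; split=> // j; rewrite -Hc ?E.
have Rconst : forall f (ys : {ffun 'I_n -> G}),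
    (forall j, P (ys j) abar = Some a) -> P (o f ys) abar = P f abar.
  move=> f ys E; apply: opt_ext => b; rewrite (Pc f ys abar b); split.
  - move=> [c [Hc Hf]]; suff <- : c = abar by [].
    by apply/ffunP => j; rewrite ffunE; move: (Hc j); rewrite E => -[].
  - by move=> Hf; exists abar; split=> // j; rewrite E ffunE.
have Tfun : forall t, Tn o R t -> forall x y, P x abar = P y abar ->
    P (t x) abar = P (t y) abar.
  move=> t; elim=> [//|t0 a0 b i _ IH|t0 i _ IH] x y E.
  - by apply: cong => j; rewrite !ffunE; case: (j == i) => //; apply: IH.
  - by rewrite !PR /pR (IH x y E).
have HPa : forall g, H g -> P g abar = Some a by move=> g /HP.
split.
  move=> x /HP Hx; apply/HP; rewrite (Rconst x) // => j; by rewrite ffunE.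
split.
  move=> x y /HP Hxy /HP Hy; apply/HP; by rewrite -Hxy Rconst // => j; rewrite ffunE.
split.
  move=> x y t Ht /HP Hx /HP Hy /HP Htx; apply/HP; by rewrite -(Tfun t Ht x y) // Hx Hy.
exists (fun g => P g abar <> None).
have eqx : forall x y, x = o y (Rtuple R x) -> P x abar <> None ->
    P x abar = P y abar.
  move=> x y Ex Ux; rewrite {1}Ex Rconst // => j.
  by rewrite ffunE PR /pR; case: (P x abar) Ux => // _ _; rewrite ffunE.
have eqc : forall x y i u (w : {ffun 'I_n -> G}),
    x = o y (Rtuple R x) -> P x abar <> None ->
    P (o u (subst_at w i x)) abar = P (o u (subst_at w i y)) abar.
  move=> x y i u w Ex Ux; apply: cong => j; rewrite !ffunE.
  by case: (j == i) => //; apply: eqx.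
split; first by move=> x /HP ->.
split; first by move=> i x Ux; apply/HP; rewrite PR /pR; case: (P x abar) Ux => // _ _; rewrite ffunE.
split; first by move=> i x Ux; rewrite PR /pR; case: (P x abar) Ux => [b|] Ux //; exfalso; apply: Ux.
split.
  move=> x y t Ht /HP Hx /HP Hy; by rewrite (Tfun t Ht x y) // Hx Hy.
split; first by move=> x y i u w Ex Ux /HP Hy; apply/HP; rewrite (eqc x y) //.
split; first by move=> x y Ex Ux /HP Hy; apply/HP; rewrite (eqx x y).
split; first by move=> x y i u w Ex Ux; rewrite (eqc x y).
by [].
Qed.


Lemma Tn_comp G n o R (t s : G -> G) : Tn (n:=n) o R t -> Tn o R s -> Tn o R (fun x => t (s x)).
Proof. move=> Ht Hs; elim: Ht => [//|t0 a b i _ IH|t0 i _ IH]; [exact: Tn_sub | exact: Tn_R]. Qed.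

Lemma replace_all G n (Rel : G -> G -> Prop) (Q : {ffun 'I_n -> G} -> Prop)
  (xs ys : {ffun 'I_n -> G}) :
  (forall (zs : {ffun 'I_n -> G}) (j : 'I_n) z, Rel (zs j) z -> Q zs -> Q (subst_at zs j z)) ->
  (forall j, Rel (xs j) (ys j)) -> Q xs -> Q ys.
Proof.
move=> step Hr Qx.
pose mix k := [ffun j : 'I_n => if (j < k)%N then ys j else xs j].
suff : forall k, (k <= n)%N -> Q (mix k).
  move=> /(_ n (leqnn n)); congr Q; apply/ffunP => j; by rewrite !ffunE ltn_ord.
elim=> [_|k IH lt].
  by congr Q: Qx; apply/ffunP => j; rewrite ffunE.
have lek : (k < n)%N := lt.
have -> : mix k.+1 = subst_at (mix k) (Ordinal lek) (ys (Ordinal lek)).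
  apply/ffunP => j; rewrite !ffunE ltnS leq_eqVlt.
  case E: (j == Ordinal lek).
    by rewrite (eqP E) /= eqxx.
  have -> : (nat_of_ord j == k) = false by rewrite -E.
  by [].
apply: step; last exact: IH (ltnW lt).
by rewrite ffunE ltnn.
Qed.

Definition eps G n (o : G -> {ffun 'I_n -> G} -> G) (R : 'I_n -> G -> G) (H : G -> Prop) x y :=
  forall t, Tn o R t -> (H (t x) <-> H (t y)).

Definition cls G n (o : G -> {ffun 'I_n -> G} -> G) (R : 'I_n -> G -> G) (H : G -> Prop) x : G -> Prop :=
  fun y => eps o R H x y.

Definition Prep G n (o : G -> {ffun 'I_n -> G} -> G) (R : 'I_n -> G -> G) (H U : G -> Prop)
  (g : G) : pfun n (G -> Prop) := fun al =>
  match excluded_middle_informative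
    (exists xs : {ffun 'I_n -> G}, (forall j, al j = cls o R H (xs j)) /\ U (o g xs)) with
  | left e => Some (cls o R H (o g (proj1_sig (constructive_indefinite_description _ e))))
  | right _ => None
  end.


Lemma eps_refl G n o R H x : @eps G n o R H x x.
Proof. by move=> t _. Qed.
Lemma eps_sym G n o R H x y : @eps G n o R H x y -> eps o R H y x.
Proof. by move=> E t Ht; split; apply E. Qed.
Lemma eps_trans G n o R H x y z : @eps G n o R H x y -> eps o R H y z -> eps o R H x z.
Proof. by move=> E1 E2 t Ht; rewrite (E1 t Ht) (E2 t Ht). Qed.

Lemma clsE G n o R H x y : @cls G n o R H x = cls o R H y <-> eps o R H x y.
Proof.
split.
- move=> E; have : cls o R H y y by exact: eps_refl.
  by rewrite -E.
- move=> E; apply: functional_extensionality => z; apply: propositional_extensionality.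
  rewrite /cls; split => E2; [exact: eps_trans (eps_sym E) E2 | exact: eps_trans E E2].
Qed.

Lemma eps_ctx G n o R H s x y : Tn o R s -> @eps G n o R H x y -> eps o R H (s x) (s y).
Proof. by move=> Hs E t Ht; apply: (E (fun z => t (s z))); apply: Tn_comp. Qed.

Lemma subst_same G n (zs : {ffun 'I_n -> G}) j : subst_at zs j (zs j) = zs.
Proof. by apply/ffunP => k; rewrite ffunE; case: eqP => [->|]. Qed.

Lemma eps_tuple G n o R H g (xs ys : {ffun 'I_n -> G}) :
  (forall j, eps o R H (xs j) (ys j)) -> eps o R H (o g xs) (o g ys).
Proof.
move=> E.
apply: (replace_all (Rel := eps o R H) (Q := fun zs => eps o R H (o g xs) (o g zs)) (xs := xs)).
- move=> zs j z Ez Q; apply: eps_trans Q _.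
  rewrite -{1}(subst_same zs j).
  exact: (eps_ctx (s := fun x => o g (subst_at zs j x))) (Tn_sub g zs j (Tn_id o R)) Ez.
- exact: E.
- exact: eps_refl.
Qed.

Lemma Pspec1 G n o R H U g (al : {ffun 'I_n -> G -> Prop}) b : @Prep G n o R H U g al = Some b ->
  exists xs : {ffun 'I_n -> G}, (forall j, al j = cls o R H (xs j)) /\ U (o g xs) /\ b = cls o R H (o g xs).
Proof.
rewrite /Prep; case: excluded_middle_informative => // e [<-].
case: constructive_indefinite_description => xs [E1 E2] /=.
by exists xs.
Qed.

Lemma Pintro G n o R H U g (al : {ffun 'I_n -> G -> Prop}) (xs : {ffun 'I_n -> G}) :
  (forall j, al j = cls o R H (xs j)) -> U (o g xs) ->
  @Prep G n o R H U g al = Some (cls o R H (o g xs)).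
Proof.
move=> E1 E2; rewrite /Prep; case: excluded_middle_informative => e; last first.
  by exfalso; apply: e; exists xs.
case: constructive_indefinite_description => ys [F1 F2] /=.
congr Some; apply/clsE; apply: eps_tuple => j; apply/clsE; by rewrite -F1 E1.
Qed.

Lemma backward G n (o : G -> {ffun 'I_n -> G} -> G) (R : 'I_n -> G -> G) (H : G -> Prop) :
  (0 < n)%N -> functional_menger o R -> (exists x, H x) ->
  l_unitary o H -> normal_v_complex o R H ->
  forall U : G -> Prop, (forall x, H x -> U x) -> (forall i x, U x -> H (R i x)) ->
  (forall i x, ~ U x -> ~ U (R i x)) ->
  stabilizer o R H.
Proof.
move=> n0 [A1 [A2 [A3 [A4 [A5 [A6 A7]]]]]] [h0 Hh0] lu nv U HU RU RnU.
pose i0 : 'I_n := Ordinal n0.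
have Ueq : forall x, U x <-> H (R i0 x).
  move=> x; split; first exact: RU.
  move=> Hx; apply: NNPP => nUx; exact: (RnU i0 x nUx (HU _ Hx)).
pose c0 : {ffun 'I_n -> G} := [ffun => h0].
have stepH : forall z (zs : {ffun 'I_n -> G}) j w, H (zs j) /\ H w ->
    H (o z zs) -> H (o z (subst_at zs j w)).
  move=> z zs j w [H1 H2] Hq.
  apply: (nv (zs j) w (fun x => o z (subst_at zs j x))) => //.
  - exact: (Tn_sub z zs j (Tn_id o R)).
  - by rewrite subst_same.
have Hright : forall z (r : {ffun 'I_n -> G}), (forall k, H (r k)) -> (H (o z r) <-> H z).
  move=> z r Hr; split => Hz.
  - apply: (lu z h0) => //.
    apply: (replace_all (Rel := fun x y => H x /\ H y) (Q := fun ys => H (o z ys)) (xs := r)) => //.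
    + move=> zs j w; exact: stepH.
    + by move=> j; rewrite ffunE.
  - have Hz' : H (o z (Rtuple R z)) by rewrite A2.
    apply: (replace_all (Rel := fun x y => H x /\ H y) (Q := fun ys => H (o z ys)) (xs := Rtuple R z)) => //.
    + move=> zs j w; exact: stepH.
    + by move=> j; rewrite ffunE; split => //; apply: RU; apply: HU.
have epsH : forall x y, H x -> H y -> eps o R H x y.
  by move=> x y Hx Hy t Ht; split => Htx; [apply: (nv x y) | apply: (nv y x)].
have eps_id : forall x y, eps o R H x y -> H x -> H y.
  by move=> x y E Hx; exact: (proj1 (E (fun z => z) (Tn_id o R)) Hx).
have epsU : forall x y, eps o R H x y -> U x -> U y.
  move=> x y E; rewrite !Ueq => Hx; exact: (proj1 (E (fun z => R i0 z) (Tn_R i0 (Tn_id o R))) Hx).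
have Psome : forall g (al : {ffun 'I_n -> G -> Prop}) b, Prep o R H U g al = Some b ->
    forall xs : {ffun 'I_n -> G}, (forall j, al j = cls o R H (xs j)) ->
    U (o g xs) /\ b = cls o R H (o g xs).
  move=> g al b Hp xs E3; have [ys [E1 [E2 ->]]] := Pspec1 Hp.
  have Exy : eps o R H (o g ys) (o g xs).
    apply: eps_tuple => j; apply/clsE; by rewrite -E1 E3.
  split; first exact: epsU Exy E2.
  by apply/clsE.
have Ulem : forall f (ys : {ffun 'I_n -> G}) j, U (o f ys) -> U (ys j).
  move=> f ys j Uf; apply/Ueq.
  have := RU i0 _ Uf.
  rewrite (A6 i0 j) A7 A4 Hright // => k; rewrite ffunE; exact: RU.
have tR : forall t, Tn o R t -> forall w X, t (o w (Rtuple R X)) = o (t w) (Rtuple R X).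
  move=> t; elim=> [//|t1 a b i _ IH|t1 i _ IH] w X.
  - by rewrite IH A3.
  - by rewrite IH A4.
have epsR : forall w X, U X -> eps o R H (o w (Rtuple R X)) w.
  move=> w X UX t Ht; rewrite tR // Hright // => k; rewrite ffunE; exact: RU.
split; first by exists h0.
exists (G -> Prop), (Prep o R H U), (cls o R H h0).
split; [split|].
- move=> x y al b; split.
  + move=> Hp; have [xs [E1 [E2 ->]]] := Pspec1 Hp.
    rewrite A1 in E2 *.
    set ys : {ffun 'I_n -> G} := [ffun j => o (y j) xs] in E2 *.
    exists [ffun j => cls o R H (ys j)]; split.
    * move=> j; rewrite ffunE /ys ffunE; apply: Pintro => //.
      by have := Ulem _ _ j E2; rewrite /ys ffunE.
    * by apply: Pintro => // j; rewrite ffunE.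
  + move=> [c [Hc Hx]].
    have [xs [E1 _]] := Pspec1 (Hc i0).
    set ys : {ffun 'I_n -> G} := [ffun j => o (y j) xs].
    have Ec : forall j, c j = cls o R H (ys j).
      by move=> j; rewrite /ys ffunE; case: (Psome _ _ _ (Hc j) xs E1).
    have [U1 ->] := Psome _ _ _ Hx ys Ec.
    by rewrite /ys -A1; apply: Pintro => //; rewrite A1.
- move=> i x; apply: functional_extensionality => al; rewrite /pR.
  case E: (Prep o R H U x al) => [b|].
  + have [xs [E1 [E2 _]]] := Pspec1 E.
    have UR : U (o (R i x) xs).
      by apply/Ueq; rewrite -A6; apply: RU.
    rewrite (Pintro E1 UR) E1; congr Some; apply/clsE.
    by rewrite A7; apply: epsR.
  + case E3: (Prep o R H U (R i x) al) => [b|] //.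
    have [xs [E1 [E2 _]]] := Pspec1 E3.
    have UR : U (o x xs).
      by apply/Ueq; rewrite (A6 i0 i); apply: RU.
    by rewrite (Pintro E1 UR) in E.
- move=> g; split.
  + move=> Hg.
    have Hc : H (o g c0) by apply/Hright => // k; rewrite ffunE.
    rewrite (@Pintro _ _ _ _ _ _ _ _ c0); first by congr Some; apply/clsE; apply: epsH.
    * by move=> j; rewrite !ffunE.
    * exact: HU.
  + move=> E; have [|_ E2] := Psome _ _ _ E c0; first by move=> j; rewrite !ffunE.
    have /clsE E3 := E2.
    have := eps_id _ _ E3 Hh0.
    by rewrite Hright // => k; rewrite ffunE.
Qed.

Theorem theorem1 (G : Type) (n : nat) (o : G -> {ffun 'I_n -> G} -> G)
  (R : 'I_n -> G -> G) (H : G -> Prop) :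
  (0 < n)%N ->
  functional_menger o R ->
  (exists x, H x) ->
  (stabilizer o R H <->
   (quasi_stable o H /\ l_unitary o H /\ normal_v_complex o R H /\
    exists U : G -> Prop,
      (forall x, H x -> U x) /\
      (forall i x, U x -> H (R i x)) /\
      (forall i x, ~ U x -> ~ U (R i x)) /\
      (forall x y t, Tn o R t -> H x -> H y -> U (t x) -> U (t y)) /\
      (forall x y i u (w : {ffun 'I_n -> G}),
         x = o y (Rtuple R x) -> U x ->
         H (o u (subst_at w i y)) -> H (o u (subst_at w i x))) /\
      (forall x y, x = o y (Rtuple R x) -> U x -> H y -> H x) /\
      (forall x y i u (w : {ffun 'I_n -> G}),
         x = o y (Rtuple R x) -> U x ->
         U (o u (subst_at w i y)) -> U (o u (subst_at w i x))) /\
      (forall x y, x = o y (Rtuple R x) -> U x -> U y -> U x))).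
Proof.
move=> n0 FM HE; split; first exact: forward.
move=> [_ [lu [nv [U [HU [RU [RnU _]]]]]]].
exact: (backward n0 FM HE lu nv HU RU RnU).
Qed.
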